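(* If there exist an orthogonal design of order $4m$ and type $(s_1,\ldots,s_u)$ and two Hadamard matrices of order $4n$ that are quasi-unbiased for parameters $(4n,4n,l,a)$, then there exist two orthogonal designs of order $8mn$ and type $(2ns_1,\ldots,2ns_u)$ that are unbiased with parameter $\alpha=16n^2/a$.
   Context: A Hadamard matrix of order $n$ is an $n\times n$ $(1,-1)$-matrix $H$ with $HH^\top=nI_n$; a weighing matrix of order $n$ and weight $k$ is an $n\times n$ $(0,1,-1)$-matrix $W$ with $WW^\top=kI_n$. Two weighing matrices (in particular Hadamard matrices) $W_1,W_2$ of order $n$ and weight $k$ are quasi-unbiased for parameters $(n,k,l,a)$ if $\frac1{\sqrt a}W_1W_2^\top$ is a weighing matrix of order $n$ and weight $l$. An orthogonal design of order $n$ and type $(s_1,\ldots,s_u)$ in distinct commuting real indeterminates $x_1,\ldots,x_u$ is an $n\times n$ matrix $D$ with entries in $\{0,\pm x_1,\ldots,\pm x_u\}$ with $DD^\top=(s_1x_1^2+\cdots+s_ux_u^2)I_n$. Two orthogonal designs $D_1,D_2$ of the same order and type $(t_1,\ldots,t_u)$ in the same variables are unbiased with parameter $\alpha$ if $\alpha>0$ and there is a $(0,1,-1)$-matrix $V$ with $D_1D_2^\top=\frac{t_1x_1^2+\cdots+t_ux_u^2}{\sqrt\alpha}V$. *)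

(* Defs.v *)
From HB Require Import structures.
From mathcomp Require Import all_boot all_order all_algebra.
From mathcomp Require Import reals.
Set Implicit Arguments. Unset Strict Implicit. Unset Printing Implicit Defensive.
Import Order.TTheory GRing.Theory Num.Theory.
Local Open Scope ring_scope.

Definition is01mx (R : numDomainType) (n : nat) (W : 'M[R]_n) : Prop :=
  forall i j, W i j = 0 \/ W i j = 1 \/ W i j = -1.

Definition is_hadamard (R : numDomainType) (n : nat) (H : 'M[R]_n) : Prop :=
  (forall i j, H i j = 1 \/ H i j = -1) /\ H *m H^T = n%:R%:M.

Definition is_weighing (R : numDomainType) (n k : nat) (W : 'M[R]_n) : Prop :=
  is01mx W /\ W *m W^T = k%:R%:M.

Definition quasi_unbiased (R : rcfType) (n k l : nat) (a : R)
  (W1 W2 : 'M[R]_n) : Prop :=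
  [/\ 0 < a, is_weighing k W1, is_weighing k W2 &
      is_weighing l ((Num.sqrt a)^-1 *: (W1 *m W2^T))].

(* Entries of an orthogonal design in u indeterminates x_0..x_{u-1}:
   None = 0, Some (b, i) = (-1)^b x_i. *)
Definition od_entry (u : nat) := option (bool * 'I_u).

Definition eval_entry (R : ringType) (u : nat) (x : 'I_u -> R)
  (e : od_entry u) : R :=
  match e with
  | None => 0
  | Some (b, i) => (-1) ^+ b * x i
  end.

Definition od_eval (R : ringType) (u N : nat) (D : 'M[od_entry u]_N)
  (x : 'I_u -> R) : 'M[R]_N :=
  \matrix_(i, j) eval_entry x (D i j).

Definition od_form (R : ringType) (u : nat) (s : 'I_u -> nat)
  (x : 'I_u -> R) : R :=
  \sum_(i < u) (s i)%:R * x i ^+ 2.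

(* D is an orthogonal design of order N and type s: D D^T = (sum s_i x_i^2) I
   as an identity in the commuting real indeterminates, i.e. for every
   real substitution. *)
Definition is_od (R : realType) (u N : nat) (s : 'I_u -> nat)
  (D : 'M[od_entry u]_N) : Prop :=
  forall x : 'I_u -> R, od_eval D x *m (od_eval D x)^T = (od_form s x)%:M.

Definition od_unbiased (R : realType) (u N : nat) (t : 'I_u -> nat) (alpha : R)
  (D1 D2 : 'M[od_entry u]_N) : Prop :=
  0 < alpha /\
  exists V : 'M[R]_N, is01mx V /\
    forall x : 'I_u -> R,
      od_eval D1 x *m (od_eval D2 x)^T = (od_form t x / Num.sqrt alpha) *: V.

(* Main.v *)
Require Import Defs.
From HB Require Import structures.
From mathcomp Require Import all_boot all_order all_algebra.
From mathcomp Require Import reals.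
From mathcomp Require Import zify ring lra.
Import Order.TTheory GRing.Theory Num.Theory.
Local Open Scope ring_scope.
Set Implicit Arguments. Unset Strict Implicit. Unset Printing Implicit Defensive.

Section Idx.
Variables (a b N : nat) (e : #|{: 'I_a * 'I_b}| = N).
Definition idx (i : 'I_a) (j : 'I_b) : 'I_N := cast_ord e (enum_rank (i, j)).
Definition dec (k : 'I_N) : 'I_a * 'I_b := enum_val (cast_ord (esym e) k).
Lemma decK i j : dec (idx i j) = (i, j).
Proof. by rewrite /dec /idx cast_ordK enum_rankK. Qed.
Lemma idxK k : idx (dec k).1 (dec k).2 = k.
Proof. by rewrite /idx /dec -surjective_pairing enum_valK cast_ordKV. Qed.
Lemma idx_eq i j i' j' : (idx i j == idx i' j') = (i == i') && (j == j').
Proof.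
apply/eqP/andP => [h|[/eqP -> /eqP ->]] //.
have := decK i j; rewrite h decK => -[-> ->]; by split.
Qed.
Lemma dec_eq k k' : (k == k') = ((dec k).1 == (dec k').1) && ((dec k).2 == (dec k').2).
Proof. by rewrite -idx_eq !idxK. Qed.
Lemma sum_idx (R : nmodType) (F : 'I_N -> R) :
  \sum_(k : 'I_N) F k = \sum_(i : 'I_a) \sum_(j : 'I_b) F (idx i j).
Proof.
rewrite (reindex (fun p : 'I_a * 'I_b => idx p.1 p.2)) /=; last first.
  by exists dec => [[i j] _|k _]; rewrite ?decK ?idxK.
by rewrite pair_big.
Qed.
End Idx.
Lemma cR (m n : nat) : #|{: 'I_(2 * m) * 'I_(4 * n)}| = (8 * m * n)%N.
Proof. rewrite card_prod !card_ord; lia. Qed.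
Lemma cC (m n : nat) : #|{: 'I_(4 * m) * 'I_(2 * n)}| = (8 * m * n)%N.
Proof. rewrite card_prod !card_ord; lia. Qed.
Lemma c4 (n : nat) : #|{: 'I_2 * 'I_(2 * n)}| = (4 * n)%N.
Proof. rewrite card_prod !card_ord; lia. Qed.

Definition negE u (e : od_entry u) : od_entry u :=
  if e is Some (b, i) then Some (~~ b, i) else None.
Lemma eval_neg (R : ringType) u (x : 'I_u -> R) e :
  eval_entry x (negE e) = - eval_entry x e.
Proof. by case: e => [[b i]|] /=; rewrite ?signrN ?mulNr ?oppr0. Qed.

Definition lo := (@ord0 1).
Definition hi := (@ord_max 1).

Definition Kod (R : realType) u m n (D : 'M[od_entry u]_(4 * m)) (H : 'M[R]_(4 * n))
  : 'M[od_entry u]_(8 * m * n) :=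
 \matrix_(k, k')
   let e := if H (dec (cR m n) k).2 (idx (c4 n) lo (dec (cC m n) k').2)
              == H (dec (cR m n) k).2 (idx (c4 n) hi (dec (cC m n) k').2)
            then D (idx (c4 m) lo (dec (cR m n) k).1) (dec (cC m n) k').1
            else D (idx (c4 m) hi (dec (cR m n) k).1) (dec (cC m n) k').1 in
   if H (dec (cR m n) k).2 (idx (c4 n) lo (dec (cC m n) k').2) < 0 then negE e else e.

Definition Kr (R : realType) m n (A : 'M[R]_(4 * m)) (H : 'M[R]_(4 * n)) : 'M[R]_(8 * m * n) :=
 \matrix_(k, k')
   (A (idx (c4 m) lo (dec (cR m n) k).1) (dec (cC m n) k').1 *
     ((H (dec (cR m n) k).2 (idx (c4 n) lo (dec (cC m n) k').2)
     + H (dec (cR m n) k).2 (idx (c4 n) hi (dec (cC m n) k').2)) / 2)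
   + A (idx (c4 m) hi (dec (cR m n) k).1) (dec (cC m n) k').1 *
     ((H (dec (cR m n) k).2 (idx (c4 n) lo (dec (cC m n) k').2)
     - H (dec (cR m n) k).2 (idx (c4 n) hi (dec (cC m n) k').2)) / 2)).

Lemma eval_Kod (R : realType) u m n (D : 'M[od_entry u]_(4 * m)) (H : 'M[R]_(4 * n)) x :
  (forall i j, H i j = 1 \/ H i j = -1) ->
  od_eval (Kod D H) x = Kr (od_eval D x) H.
Proof.
move=> hH; apply/matrixP => k k'; rewrite !mxE /=.
have ne : ((1 : R) == -1) = false by apply/negP => /eqP h; lra.
have ne' : ((-1 : R) == 1) = false by apply/negP => /eqP h; lra.
have [->|->] := hH (dec (cR m n) k).2 (idx (c4 n) lo (dec (cC m n) k').2);
have [->|->] := hH (dec (cR m n) k).2 (idx (c4 n) hi (dec (cC m n) k').2);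
rewrite ?eqxx ?ne ?ne' ?ltr10 ?ltrN10 ?eval_neg /=; rewrite ?mxE.
all: try field.
all: by [].
Qed.

Lemma expand4 (R : comRingType) (I J : finType) (x1 x2 x3 x4 : I -> R) (y1 y2 y3 y4 : J -> R) :
 \sum_i \sum_j (x1 i * y1 j + x2 i * y2 j) * (x3 i * y3 j + x4 i * y4 j) =
 (\sum_i x1 i * x3 i) * (\sum_j y1 j * y3 j) + (\sum_i x1 i * x4 i) * (\sum_j y1 j * y4 j)
 + (\sum_i x2 i * x3 i) * (\sum_j y2 j * y3 j) + (\sum_i x2 i * x4 i) * (\sum_j y2 j * y4 j).
Proof.
rewrite !mulr_suml -!big_split /=; apply: eq_bigr => i _.
rewrite !mulr_sumr -!big_split /=; apply: eq_bigr => j _; ring.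
Qed.

Lemma key (R : realType) m n (A : 'M[R]_(4 * m)) (H1 H2 : 'M[R]_(4 * n)) f :
  A *m A^T = f%:M ->
  Kr A H1 *m (Kr A H2)^T = \matrix_(k, k')
    (if (dec (cR m n) k).1 == (dec (cR m n) k').1
     then f * (H1 *m H2^T) (dec (cR m n) k).2 (dec (cR m n) k').2 / 2 else 0).
Proof.
move=> hA.
have hAA i j : \sum_c A i c * A j c = if i == j then f else 0.
  have -> : \sum_c A i c * A j c = (A *m A^T) i j.
    by rewrite mxE; apply: eq_bigr => c _; rewrite mxE.
  by rewrite hA mxE; case: eqP.
apply/matrixP => k k'; rewrite !mxE (sum_idx (cC m n)).
under eq_bigr => c _ do under eq_bigr => q _ do rewrite !mxE decK /=.
rewrite expand4 !hAA !idx_eq eqxx /=.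
have lohi : (lo == hi) = false by [].
rewrite ?lohi /=.
case: eqP => _; last by rewrite !mul0r !addr0.
rewrite !mul0r !addr0.
rewrite (sum_idx (c4 n)) big_ord_recl big_ord1.
have -> : lift ord0 ord0 = hi by apply: val_inj.
rewrite -mulrA -mulrDr; congr (f * _).
rewrite -big_split /= mulrDl !mulr_suml -big_split /=; apply: eq_bigr => q _.
rewrite !mxE; field.
by [].
Qed.

Lemma form2 (R : realType) u n (s : 'I_u -> nat) (x : 'I_u -> R) :
  od_form (fun i => (2 * n * s i)%N) x = (2 * n)%:R * od_form s x.
Proof. by rewrite /od_form mulr_sumr; apply: eq_bigr => i _; rewrite natrM mulrA. Qed.

Lemma isod_K (R : realType) u m n (s : 'I_u -> nat) (D : 'M[od_entry u]_(4 * m))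
  (H : 'M[R]_(4 * n)) :
  is_hadamard H -> is_od R s D -> is_od R (fun i => (2 * n * s i)%N) (Kod D H).
Proof.
move=> [hH eH] hD x; rewrite eval_Kod // (key _ _ (hD x)) eH form2.
apply/matrixP => k k'; rewrite !mxE (dec_eq (cR m n) k k').
case: eqP => _ /=; last by rewrite mulr0n.
case: eqP => _ /=; last by rewrite mulr0n mulr0 mul0r.
rewrite !mulr1n !natrM; field.
by [].
Qed.

Lemma sqrt_alpha (R : realType) n (a : R) : 0 < a ->
  Num.sqrt (16 * (n ^ 2)%N%:R / a) = 4 * n%:R / Num.sqrt a.
Proof.
move=> a0.
have sa : 0 < Num.sqrt a by rewrite sqrtr_gt0.
have ha : Num.sqrt a * Num.sqrt a = a by rewrite -expr2 sqr_sqrtr // ltW.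
have E : 16 * (n ^ 2)%N%:R / a = (4 * n%:R / Num.sqrt a) ^+ 2.
  rewrite natrX -{1}ha; field; by rewrite gt_eqF.
rewrite E sqrtr_sqr ger0_norm //.
by apply: divr_ge0; [apply: mulr_ge0 | apply: ltW].
Qed.

Theorem proposition3p12 (R : realType) (m n u : nat) (s : 'I_u -> nat)
  (l : nat) (a : R) :
  (0 < m)%N -> (0 < n)%N ->
  (exists D : 'M[od_entry u]_(4 * m), is_od R s D) ->
  (exists H1 H2 : 'M[R]_(4 * n),
      [/\ is_hadamard H1, is_hadamard H2 & quasi_unbiased (4 * n) l a H1 H2]) ->
  exists D1 D2 : 'M[od_entry u]_(8 * m * n),
    [/\ is_od R (fun i => 2 * n * s i)%N D1,
        is_od R (fun i => 2 * n * s i)%N D2 &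
        od_unbiased (fun i => 2 * n * s i)%N (16 * (n ^ 2)%N%:R / a) D1 D2].
Proof.
move=> m0 n0 [D hD] [H1 [H2 [h1 h2 [a0 _ _ [hW01 _]]]]].
exists (Kod D H1), (Kod D H2); split; try exact: isod_K.
split.
  apply: divr_gt0 => //; apply: mulr_gt0 => //; rewrite ltr0n expn_gt0 n0 //.
exists (\matrix_(k, k') if (dec (cR m n) k).1 == (dec (cR m n) k').1 then
   ((Num.sqrt a)^-1 *: (H1 *m H2^T)) (dec (cR m n) k).2 (dec (cR m n) k').2 else 0).
split.
  move=> i j; rewrite mxE; case: eqP => _; [exact: hW01 | by left].
move=> x; rewrite !eval_Kod; try (by case: h1); try (by case: h2).
rewrite (key _ _ (hD x)); apply/matrixP => k k'; rewrite !mxE.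
case: eqP => _; last by rewrite mulr0.
rewrite form2 sqrt_alpha // ?mxE.
have sa : Num.sqrt a != 0 by rewrite gt_eqF // sqrtr_gt0.
have nn : (n%:R : R) != 0 by rewrite pnatr_eq0 -lt0n.
rewrite natrM; field.
by rewrite sa nn.
Qed.
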